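(* In the lace-expansion setting described in the context, suppose $\sum_x|x|^M|\Pi(x)|<\infty$ for a positive integer $M$. Then for every $1\le m\le M$ and $j=1,\dots,d$ there is a constant $c$ (possibly depending on $m$) such that $$\Big|\frac{\partial^m}{\partial k_j^m}\hat G(k)\Big|\le\frac{c}{|k|^{2+m}}\qquad(k\in[-\pi,\pi]^d\setminus\{0\}).$$
   Context: Lace-expansion setting: $d\ge3$; $\Pi:\mathbb{Z}^d\to\mathbb{R}$ is $\mathbb{Z}^d$-symmetric (invariant under permutations and sign changes of coordinates) with $\sum_x|x|^2|\Pi(x)|<\infty$, and $\hat\Pi(k)=\sum_x\Pi(x)e^{-ik\cdot x}$. Let $\hat D(k)=\frac1d\sum_{j=1}^d\cos k_j$, and let $p>0$, $G_0>0$ be constants. $(\hat J,\hat g)$ is one of: (a) $\hat J=2dp\hat D+\hat\Pi$, $\hat g=1$; (b) $\hat J=2dp\hat D(1+\hat\Pi)$, $\hat g=1+\hat\Pi$; (c) $\hat J=2dp\hat D(G_0+\hat\Pi)$, $\hat g=G_0+\hat\Pi$. It is assumed that $\hat J(0)=1$ and that there is $c_1>0$ with $\hat J(0)-\hat J(k)\ge c_1|k|^2$ for all $k\in[-\pi,\pi]^d$. Set $\hat G(k)=\hat g(k)/(1-\hat J(k))$ and $G(x)=\int_{[-\pi,\pi]^d}\frac{d^dk}{(2\pi)^d}e^{ik\cdot x}\hat G(k)$. *)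

(* Defs.v *)
From HB Require Import structures.
From mathcomp Require Import all_boot all_order all_algebra. From mathcomp Require Import perm.
From mathcomp Require Import all_classical all_reals all_analysis.
Set Implicit Arguments. Unset Strict Implicit. Unset Printing Implicit Defensive.
Import Order.TTheory GRing.Theory Num.Theory numFieldNormedType.Exports.
Local Open Scope ring_scope.

Section LaceDefs.
Variables (R : realType) (d : nat).

Definition zpt := 'I_d -> int.

Definition znorm (x : zpt) : R := Num.sqrt (\sum_(i < d) ((x i)%:~R) ^+ 2).
Definition rnorm (k : 'I_d -> R) : R := Num.sqrt (\sum_(i < d) (k i) ^+ 2).

Definition dotkx (k : 'I_d -> R) (x : zpt) : R := \sum_(i < d) k i * (x i)%:~R.

(* The point of the box [-N,N]^d coded by y. *)
Definition boxpt (N : nat) (y : {ffun 'I_d -> 'I_(N.*2.+1)}) : zpt :=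
  fun i => (nat_of_ord (y i))%:Z - N%:Z.

Definition boxsum (N : nat) (F : zpt -> R) : R :=
  \sum_(y : {ffun 'I_d -> 'I_(N.*2.+1)}) F (boxpt y).

(* sum_x |x|^M |Pi x| < oo  (the partial sums over boxes are nondecreasing,
   so finiteness is boundedness of the box partial sums). *)
Definition moment_finite (M : nat) (Pi : zpt -> R) : Prop :=
  exists B : R, forall N, boxsum N (fun x => znorm x ^+ M * `|Pi x|) <= B.

Definition Zd_symmetric (Pi : zpt -> R) : Prop :=
  forall (s : {perm 'I_d}) (eps : 'I_d -> bool) (x : zpt),
    Pi (fun i => (-1) ^+ eps i * x (s i)) = Pi x.

(* Fourier transform hat Pi(k) = sum_x Pi(x) e^{-i k.x}, as the limit of the
   box partial sums (the series converges absolutely).  Since Pi is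
   Z^d-symmetric, the sine part vanishes, so hat Pi(k) = sum_x Pi(x) cos(k.x). *)
Definition hatPi (Pi : zpt -> R) (k : 'I_d -> R) : R :=
  limn (fun N => boxsum N (fun x => Pi x * cos (dotkx k x))).

Definition hatD (k : 'I_d -> R) : R := (d%:R)^-1 * \sum_(j < d) cos (k j).

Definition in_torus (k : 'I_d -> R) : Prop := forall j, - pi <= k j <= pi.

Definition zerok : 'I_d -> R := fun _ => 0.

Definition along (f : ('I_d -> R) -> R) (k : 'I_d -> R) (j : 'I_d) : R -> R :=
  fun t => f (fun i => k i + (if i == j then t else 0)).

Definition partialn (m : nat) (f : ('I_d -> R) -> R) (k : 'I_d -> R) (j : 'I_d) : R :=
  derive1n m (along f k j) 0.

Definition partialn_exists (m : nat) (f : ('I_d -> R) -> R) (k : 'I_d -> R) (j : 'I_d) : Prop :=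
  forall i, (i < m)%N -> \forall t \near (0 : R), derivable (derive1n i (along f k j)) t 1.

End LaceDefs.

(* Main.v *)
Require Import Defs.
From HB Require Import structures.
From mathcomp Require Import all_boot all_order all_algebra. From mathcomp Require Import perm.
From mathcomp Require Import all_classical all_reals all_analysis.
Import Order.TTheory GRing.Theory Num.Theory numFieldNormedType.Exports.
Local Open Scope ring_scope.

From mathcomp Require Import ring lra zify.
Require Import Defs.
Set Implicit Arguments. Unset Strict Implicit.

Section Prof.
Variables (R : realType) (dl D : R).
Hypotheses (dl_gt0 : 0 < dl) (dlD : dl <= D) (D1 : 1 <= D).

Definition pw (e : int) : R := dl ^ e.

Lemma pw_gt0 e : 0 < pw e. Proof. exact: exprz_gt0. Qed.
Lemma pw_ge0 e : 0 <= pw e. Proof. exact/ltW/pw_gt0. Qed.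
Lemma pwD a b : pw (a + b) = pw a * pw b.
Proof. by rewrite /pw expfzDr // gt_eqF. Qed.
Lemma pw1 : pw 1 = dl. Proof. by []. Qed.
Lemma pw0 : pw 0 = 1. Proof. by []. Qed.
Lemma pw_low e : pw e <= D * pw (e - 1).
Proof.
have -> : pw e = pw 1 * pw (e - 1) by rewrite -pwD addrC subrK.
rewrite pw1; apply: ler_wpM2r => //; exact: pw_ge0.
Qed.

Fixpoint Pr (K : R) (m : nat) (e : int) (f : R -> R) : Prop :=
  match m with
  | 0 => `|f 0| <= K * pw e
  | m'.+1 => `|f 0| <= K * pw e /\ (\forall t \near (0:R), derivable f t 1)
             /\ Pr K m' (e - 1) (derive1 f)
  end.

Lemma Pr0 K m e f : Pr K m e f -> `|f 0| <= K * pw e.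
Proof. by case: m => [|m] //= []. Qed.

Lemma Pr_K0 K m e f : Pr K m e f -> 0 <= K.
Proof.
move/Pr0 => h; have : 0 <= K * pw e by exact: le_trans h.
by rewrite pmulr_lge0 // pw_gt0.
Qed.

Lemma near_near (P : R -> Prop) : (\forall t \near (0:R), P t) ->
  \forall t \near (0:R), \forall s \near t, P s.
Proof. by move=> /nbhs_interior. Qed.

Lemma Pr_ext K m e f g : (\forall t \near (0:R), f t = g t) -> Pr K m e f -> Pr K m e g.
Proof.
elim: m e f g => [|m IH] e f g fg /=.
  by rewrite -(nbhs_singleton fg).
move=> [h0 [hd hP]]; split; first by rewrite -(nbhs_singleton fg).
have fgn := near_near fg.
split.
  near=> t; apply: (near_eq_derivable (f:=f)); [near: t; exact: fgn| near: t; exact: hd].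
apply: IH hP; near=> t; rewrite !derive1E; apply: near_eq_derive.
near: t; exact: fgn.
Unshelve. all: by end_near. Qed.

Lemma Pr_le K K' m e f : K <= K' -> Pr K m e f -> Pr K' m e f.
Proof.
move=> KK'; elim: m e f => [|m IH] e f /=.
  move=> h; apply: le_trans h _; apply: ler_wpM2r => //; exact: pw_ge0.
move=> [h0 [hd hP]]; split; last by split => //; exact: IH.
apply: le_trans h0 _; apply: ler_wpM2r => //; exact: pw_ge0.
Qed.

Lemma Pr_down K m e f : Pr K m.+1 e f -> Pr K m e f.
Proof.
elim: m e f => [|m IH] e f /=; first by case.
by move=> [h0 [hd hP]]; split => //; split => //; exact: IH.
Qed.

Lemma Pr_downn K m n e f : (n <= m)%N -> Pr K m e f -> Pr K n e f.
Proof.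
move=> nm; elim: m nm => [|m IH]; first by rewrite leqn0 => /eqP->.
rewrite leq_eqVlt ltnS => /orP[/eqP->//|nm] /Pr_down; exact: IH.
Qed.

Lemma Pr_lowe K m e f : Pr K m e f -> Pr (K * D) m (e - 1) f.
Proof.
elim: m e f => [|m IH] e f /=.
  move=> h; have K0 : 0 <= K by exact: (Pr_K0 (m:=0) h).
  apply: le_trans h _; rewrite -mulrA; apply: ler_wpM2l => //; exact: pw_low.
move=> [h0 [hd hP]]; have K0 : 0 <= K by exact: (Pr_K0 (m:=0) h0).
split.
  apply: le_trans h0 _; rewrite -mulrA; apply: ler_wpM2l => //; exact: pw_low.
by split => //; exact: IH.
Qed.

Lemma Pr_eqe K m e e' f : e = e' -> Pr K m e f -> Pr K m e' f.
Proof. by move->. Qed.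

Lemma Pr_add K1 K2 m e f g : Pr K1 m e f -> Pr K2 m e g ->
  Pr (K1 + K2) m e (fun t => f t + g t).
Proof.
elim: m e f g => [|m IH] e f g /=.
  move=> hf hg; rewrite mulrDl; apply: le_trans (ler_normD _ _) _; exact: lerD.
move=> [hf0 [hfd hfP]] [hg0 [hgd hgP]]; split.
  rewrite mulrDl; apply: le_trans (ler_normD _ _) _; exact: lerD.
split.
  by apply: filterS2 hfd hgd => t hf1 hg1; exact: (derivableD hf1 hg1).
apply: Pr_ext (IH _ _ _ hfP hgP).
apply: filterS2 hfd hgd => t hf1 hg1; rewrite !derive1E.
rewrite -(deriveD hf1 hg1); by [].
Unshelve. all: by end_near. Qed.

Lemma Pr_scale K c m e f : Pr K m e f -> Pr (`|c| * K) m e (fun t => c * f t).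
Proof.
elim: m e f => [|m IH] e f /=.
  by move=> h; rewrite normrM -mulrA ler_wpM2l.
move=> [h0 [hd hP]]; split; first by rewrite normrM -mulrA ler_wpM2l.
split.
  apply: filterS hd => t hf1.
  have := derivableM (derivable_cst c t 1) hf1; by [].
apply: Pr_ext (IH _ _ hP).
apply: filterS hd => t hf1; rewrite !derive1E.
have := deriveMl c hf1; rewrite /= => ->; by [].
Unshelve. all: by end_near. Qed.

Lemma Pr_cst K m e c : `|c| <= K * pw e -> 0 <= K ->
  Pr K m e (fun _ => c).
Proof.
elim: m e c => [|m IH] e c //= hc K0; split => //; split.
  by near=> t; exact: derivable_cst.
apply: (@Pr_ext _ _ _ (fun _ => 0)); last first.
  apply: IH => //; rewrite normr0; apply: mulr_ge0 => //; exact: pw_ge0.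
by near=> t; rewrite derive1E derive_cst.
Unshelve. all: by end_near. Qed.

Lemma Pr_mul K1 K2 m a b f g : Pr K1 m a f -> Pr K2 m b g ->
  Pr (2 ^+ m * (K1 * K2)) m (a + b) (fun t => f t * g t).
Proof.
elim: m a b f g => [|m IH] a b f g /=.
  move=> hf hg; rewrite expr0 mul1r pwD normrM mulrACA.
  apply: ler_pM => //; exact: (Pr_K0 (m:=0) hf).
move=> [hf0 [hfd hfP]] [hg0 [hgd hgP]].
have K10 : 0 <= K1 by exact: (Pr_K0 (m:=0) hf0).
have K20 : 0 <= K2 by exact: (Pr_K0 (m:=0) hg0).
have hf' : Pr K1 m a f := Pr_down (m:=m) (conj hf0 (conj hfd hfP)).
have hg' : Pr K2 m b g := Pr_down (m:=m) (conj hg0 (conj hgd hgP)).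
split.
  rewrite pwD normrM; apply: le_trans (_ : K1 * pw a * (K2 * pw b) <= _).
    by apply: ler_pM.
  rewrite mulrACA ler_wpM2r ?mulr_ge0 ?pw_ge0 //.
  by rewrite ler_peMl ?mulr_ge0 // exprn_ege1 // ler1n.
split.
  apply: filterS2 hfd hgd => t hf1 hg1.
  have := derivableM hf1 hg1; by [].
have H1 := IH _ _ _ _ hfP hg'.
have H2 := IH _ _ _ _ hf' hgP.
have E1 : (a - 1 + b) = (a + b - 1) by rewrite addrAC.
have E2 : (a + (b - 1)) = (a + b - 1) by rewrite addrA.
rewrite E1 in H1; rewrite E2 in H2.
have H := Pr_add H1 H2.
apply: Pr_ext; last first.
{ apply: Pr_le H.
     rewrite exprS -mulrA mulr2n mulrDl mul1r.
     by apply: lerD; rewrite // ?(mulrA K1) // mulrCA. }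
apply: filterS2 hfd hgd => t hf1 hg1; rewrite !derive1E.
have := deriveM hf1 hg1; rewrite /= => ->.
by rewrite /GRing.scale /= addrC mulrC [g t * _]mulrC.
Unshelve. all: by end_near. Qed.


Lemma derive1nSr (f : R -> R) i : derive1n i.+1 f = derive1n i (derive1 f).
Proof. by rewrite /derive1n iterSr. Qed.

Lemma Pr_nth K m e f i : (i <= m)%N -> Pr K m e f ->
  `|derive1n i f 0| <= K * pw (e - i%:Z).
Proof.
elim: i m e f => [|i IH] m e f.
  by move=> _ /Pr0; rewrite derive1n0 subr0.
case: m => [//|m]; rewrite ltnS => im [_ [_ hP]].
rewrite derive1nSr; have := IH _ _ _ im hP.
by have -> : e - 1 - i%:Z = e - i.+1%:Z by rewrite -addrA -opprD addrC -intS addrC.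
Qed.

Lemma Pr_exists K m e f : Pr K m e f -> forall i, (i < m)%N ->
  \forall t \near (0:R), derivable (derive1n i f) t 1.
Proof.
move=> + i; elim: i m e f => [|i IH] m e f.
  by case: m => [//|m] [_ [hd _]] _; rewrite derive1n0.
case: m => [//|m] [_ [_ hP]]; rewrite ltnS => im.
rewrite derive1nSr; exact: IH hP im.
Qed.

Lemma near_neq0 (v : R -> R) : v 0 != 0 -> derivable v 0 1 ->
  \forall t \near (0:R), v t != 0.
Proof.
move=> v0 dv.
have cv : {for 0, continuous v}.
  by apply: differentiable_continuous; apply/derivable1_diffP.
have := (cvgrPdist_lt _ _).1 cv `|v 0|; rewrite normr_gt0 => /(_ _ v0).
apply: filterS => t ht; apply/negP => /eqP vt0.
by move: ht; rewrite vt0 subr0 ltxx.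
Qed.

Fixpoint Kv (c A : R) m := match m with
  | 0 => c^-1
  | m'.+1 => c^-1 + 2 ^+ m' * (A * (2 ^+ m' * (Kv c A m' * Kv c A m')))
  end.

Lemma Kv_ge0 c A m : 0 <= c -> 0 <= A -> 0 <= Kv c A m.
Proof.
move=> c0 A0; elim: m => [|m IH] /=; first by rewrite invr_ge0.
by rewrite addr_ge0 ?invr_ge0 // !mulr_ge0 // exprn_ge0.
Qed.

Lemma Pr_inv (c A : R) (m : nat) (v : R -> R) : 0 < c -> c * dl ^+ 2 <= `|v 0| ->
  (\forall t \near (0:R), derivable v t 1) -> Pr A m.-1 1 (derive1 v) ->
  Pr (Kv c A m) m (-2) (fun t => (v t)^-1).
Proof.
move=> c0 hv0 hvd.
have A0 : forall m, Pr A m 1 (derive1 v) -> 0 <= A by move=> m' /Pr_K0.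
have v0 : v 0 != 0.
  rewrite -normr_gt0; apply: lt_le_trans hv0; apply: mulr_gt0 => //.
  exact: exprn_gt0.
have hinv : `|(v 0)^-1| <= c^-1 * pw (-2).
  rewrite normfV /pw -invr_expz -exprnP -invfM lef_pV2 ?posrE ?normr_gt0 //.
  by apply: mulr_gt0 => //; exact: exprn_gt0.
have vn0 := near_neq0 v0 (nbhs_singleton hvd).
elim: m => [|m IH] hP /=; first exact: hinv.
have A00 := A0 _ hP.
have Kv0 := Kv_ge0 m (ltW c0) A00.
split.
  apply: le_trans hinv _; apply: ler_wpM2r; first exact: pw_ge0.
  by rewrite lerDl !mulr_ge0 // exprn_ge0.
split.
  by apply: filterS2 hvd vn0 => t h1 h2; exact: derivableV.
have Hw := IH (Pr_downn (leq_pred m) hP).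
have Hww := Pr_mul Hw Hw.
have H3 := Pr_mul hP Hww.
have H4 := Pr_scale (-1) H3.
rewrite normrN1 mul1r in H4.
have E : (1 + (-2 + -2)) = (-2 - 1 :> int) by [].
rewrite E in H4.
apply: Pr_ext; last first.
  apply: Pr_le H4; by rewrite lerDr invr_ge0 ltW.
apply: filterS2 hvd vn0 => t h1 h2; rewrite !derive1E.
rewrite deriveV //= /GRing.scale /=.
by rewrite mulN1r expr2 invfM mulNr mulrC.
Qed.

Definition Q (K : R) (m : nat) (f : R -> R) := `|f 0| <= K /\ (\forall t \near (0:R), derivable f t 1)
   /\ Pr K m.-1 1 (derive1 f).

Lemma Q_Pr K m f : Q K m f -> Pr (K * (D * D)) m 0 f.
Proof.
move=> [h0 [hd hP]]; have K0 := Pr_K0 hP.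
have DD : 1 <= D * D by rewrite -[1]mulr1; apply: ler_pM.
case: m hP => [|m] hP.
  by rewrite /= pw0 mulr1; apply: le_trans h0 _; rewrite ler_peMr.
split.
  by rewrite pw0 mulr1; apply: le_trans h0 _; rewrite ler_peMr.
split => //; rewrite mulrA; exact: (Pr_eqe _ (Pr_lowe (Pr_lowe hP))).
Qed.

Lemma Q_add K1 K2 m f g : Q K1 m f -> Q K2 m g -> Q (K1 + K2) m (fun t => f t + g t).
Proof.
move=> [hf0 [hfd hfP]] [hg0 [hgd hgP]]; split.
  by apply: le_trans (ler_normD _ _) _; exact: lerD.
split.
  by apply: filterS2 hfd hgd => t hf1 hg1; exact: (derivableD hf1 hg1).
apply: Pr_ext (Pr_add hfP hgP).
apply: filterS2 hfd hgd => t hf1 hg1; rewrite !derive1E.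
rewrite -(deriveD hf1 hg1); by [].
Qed.

Lemma Q_scale K c m f : Q K m f -> Q (`|c| * K) m (fun t => c * f t).
Proof.
move=> [h0 [hd hP]]; split; first by rewrite normrM ler_wpM2l.
split.
  apply: filterS hd => t hf1.
  have := derivableM (derivable_cst c t 1) hf1; by [].
apply: Pr_ext (Pr_scale c hP).
apply: filterS hd => t hf1; rewrite !derive1E.
have := deriveMl c hf1; rewrite /= => ->; by [].
Qed.

Lemma Q_cst K m c : `|c| <= K -> Q K m (fun _ => c).
Proof.
move=> cK; have K0 : 0 <= K := le_trans (normr_ge0 _) cK.
split => //; split; first by near=> t; exact: derivable_cst.
apply: (@Pr_ext _ _ _ (fun _ => 0)).
  by near=> t; rewrite derive1E derive_cst.
by apply: Pr_cst; rewrite // normr0 mulr_ge0 // pw_ge0.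
Unshelve. all: by end_near. Qed.

Definition Kmul m K1 K2 := K1 * K2 + (2 ^+ m.-1 * (K1 * (K2 * (D * D))) +
   2 ^+ m.-1 * (K1 * (D * D) * K2)).

Lemma Q_mul K1 K2 m f g : Q K1 m f -> Q K2 m g ->
  Q (Kmul m K1 K2) m (fun t => f t * g t).
Proof.
move=> hf hg.
have hfP2 := Pr_downn (leq_pred m) (Q_Pr hf).
have hgP2 := Pr_downn (leq_pred m) (Q_Pr hg).
case: hf => [hf0 [hfd hfP]]; case: hg => [hg0 [hgd hgP]].
have K10 := Pr_K0 hfP; have K20 := Pr_K0 hgP.
have DD : 0 <= D * D by rewrite mulr_ge0 // (le_trans ler01 D1).
have S0 : 0 <= (2 ^+ m.-1 * (K1 * (K2 * (D * D))) + 2 ^+ m.-1 * (K1 * (D * D) * K2)).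
  have e2 : 0 <= 2 ^+ m.-1 :> R by apply: exprn_ge0; rewrite ler0n.
  have a1 := mulr_ge0 K20 DD; have a2 := mulr_ge0 K10 DD.
  by apply: addr_ge0; apply: mulr_ge0 => //; apply: mulr_ge0.
split.
  by rewrite normrM /Kmul; apply: le_trans (ler_pM _ _ hf0 hg0) _ => //; rewrite lerDl.
split.
  apply: filterS2 hfd hgd => t hf1 hg1.
  have := derivableM hf1 hg1; by [].
have H1 := Pr_mul hfP hgP2.
have H2 := Pr_mul hfP2 hgP.
rewrite addr0 in H1; rewrite add0r in H2.
have H := Pr_add H1 H2.
apply: Pr_ext; last first.
  apply: Pr_le H; rewrite /Kmul lerDr; exact: mulr_ge0.
apply: filterS2 hfd hgd => t hf1 hg1; rewrite !derive1E.
have := deriveM hf1 hg1; rewrite /= => ->.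
by rewrite /GRing.scale /= addrC mulrC [g t * _]mulrC.
Qed.


Lemma tower_Pr (K : R) (m : nat) (e : int) (F : nat -> R -> R) :
  (forall n, (n < m)%N -> forall t : R, is_derive t 1 (F n) (F n.+1 t)) ->
  (forall n, (n <= m)%N -> `|F n 0| <= K * pw (e - n%:Z)) -> Pr K m e (F 0%N).
Proof.
elim: m e F => [|m IH] e F hd hb.
  by have := hb 0%N (leqnn 0); rewrite subr0.
split; first by have := hb 0%N (leq0n _); rewrite subr0.
split.
  near=> t; have := hd 0%N (ltn0Sn _) t; by case.
have -> : derive1 (F 0%N) = F 1%N.
  apply: funext => t; rewrite derive1E; have := hd 0%N (ltn0Sn _) t.
  by move=> h; rewrite derive_val.
apply: (IH _ (fun n => F n.+1)).
  by move=> n nm t; apply: hd.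
move=> n nm; have := hb n.+1 nm.
by have -> : e - n.+1%:Z = e - 1 - n%:Z by rewrite -addrA -opprD addrC -intS addrC.
Unshelve. all: by end_near. Qed.

Lemma pw_big i m : (i <= m)%N -> 1 <= D ^+ m * pw (- i%:Z).
Proof.
move=> im; rewrite /pw -exprnN.
have Dp : 0 < D by exact: lt_le_trans ltr01 D1.
rewrite ler_pdivlMr ?exprn_gt0 // mul1r.
apply: le_trans (_ : D ^+ i <= _).
  by apply: lerXn2r => //; rewrite ?nnegrE ltW.
exact: ler_weXn2l.
Qed.

Lemma tower_Q (S : R) (m : nat) (F : nat -> R -> R) : (0 < m)%N ->
  (forall n, (n < m)%N -> forall t : R, is_derive t 1 (F n) (F n.+1 t)) ->
  `|F 0%N 0| <= S -> `|F 1%N 0| <= S * dl ->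
  (forall n, (2 <= n <= m)%N -> `|F n 0| <= S) -> Q (S * D ^+ m) m (F 0%N).
Proof.
move=> m0 hd h0 h1 h2.
have S0 : 0 <= S := le_trans (normr_ge0 _) h0.
have Dm : 1 <= D ^+ m by exact: exprn_ege1.
split.
  by apply: le_trans h0 _; rewrite ler_peMr.
split.
  near=> t; have := hd 0%N m0 t; by case.
have -> : derive1 (F 0%N) = F 1%N.
  apply: funext => t; rewrite derive1E; have := hd 0%N m0 t.
  by move=> h; rewrite derive_val.
apply: (@tower_Pr _ _ _ (fun n => F n.+1)).
  by move=> n nm t; apply: hd; rewrite -ltnS prednK in nm.
case=> [|n] nm.
  rewrite subr0 pw1; apply: le_trans h1 _; rewrite -mulrA ler_wpM2l //.
  by rewrite ler_peMl // ltW.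
have nm' : (n.+2 <= m)%N by move: nm; rewrite -ltnS prednK.
have -> : (1 - n.+1%:Z) = - n%:Z by lia.
apply: le_trans (h2 n.+2 _) _; first by rewrite nm'.
rewrite -mulrA ler_peMr //; apply: pw_big.
by apply: leq_trans nm'; rewrite ltnW.
Unshelve. all: by end_near. Qed.

End Prof.

Section Prof2.
Variables (R : realType) (dl D : R).
Hypotheses (dl_gt0 : 0 < dl) (dlD : dl <= D) (D1 : 1 <= D).

Lemma Q_ext K m (f g : R -> R) : f =1 g -> Q dl K m f -> Q dl K m g.
Proof. by move=> /funext ->. Qed.

Definition Kg (QP b l : R) := `|b| + `|l| * QP.
Definition KJ m (QD QP a b l u : R) :=
  Kmul D m (`|a| * QD) (Kg QP b l) + `|u| * QP.

Lemma build (Dt P : R -> R) (QD QP a b l u : R) m :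
  Q dl QD m Dt -> Q dl QP m P ->
  Q dl (Kg QP b l) m (fun t => b + l * P t) /\
  Q dl (1 + KJ m QD QP a b l u) m (fun t => 1 - (a * Dt t * (b + l * P t) + u * P t)).
Proof.
move=> hD hP.
have hg : Q dl (Kg QP b l) m (fun t => b + l * P t).
  exact: (Q_add (Q_cst dl_gt0 m (lexx `|b|)) (Q_scale l hP)).
split => //.
have hJ := Q_add (Q_mul dl_gt0 dlD D1 (Q_scale a hD) hg) (Q_scale u hP).
have := Q_add (Q_cst dl_gt0 m (c:=1) (lexx `|1|)) (Q_scale (-1) hJ).
rewrite normrN1 mul1r normr1.
apply: Q_ext => t; by rewrite mulN1r.
Qed.

Lemma assemble (u v : R -> R) (Ku Kv' c1 : R) m : 0 < c1 ->
  Q dl Ku m u -> Q dl Kv' m v -> c1 * dl ^+ 2 <= `|v 0| ->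
  Pr dl (2 ^+ m * (Ku * (D * D) * Kv c1 Kv' m)) m (-2) (fun t => u t * (v t)^-1).
Proof.
move=> c0 hu [hv0 [hvd hvP]] hlow.
have hw := Pr_inv dl_gt0 c0 hlow hvd hvP.
have := Pr_mul dl_gt0 (Q_Pr dl_gt0 dlD D1 hu) hw.
by rewrite add0r.
Qed.

End Prof2.

Local Open Scope classical_set_scope. Local Open Scope ring_scope.
Section B0.
Variable R : realType.

Lemma lip_aux (f df : R -> R) (u v : R) :
  (forall x : R, is_derive x 1 f (df x)) -> (forall x : R, `|df x| <= 1) ->
  continuous f -> `|f u - f v| <= `|u - v|.
Proof.
move=> hd hb hc.
wlog uv : u v / v <= u.
  move=> W; case: (leP v u) => [|/ltW vu]; first exact: W.
  by rewrite distrC [`|u - v|]distrC; exact: W.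
have [c _ ->] := MVT_segment uv (fun x _ => hd x) (@continuous_subspaceT _ _ _ _ hc).
by rewrite normrM ler_piMl.
Qed.

Lemma cos_lip (u v : R) : `|cos u - cos v| <= `|u - v|.
Proof.
apply: (@lip_aux cos (fun x => - sin x)) => //.
- by move=> x; rewrite normrN sin_max.
- exact: continuous_cos.
Qed.

Lemma sin_le (u : R) : `|sin u| <= `|u|.
Proof.
have := @lip_aux sin cos u 0 (fun x => is_derive_sin x) (@cos_max R) (@continuous_sin R).
by rewrite sin0 !subr0.
Qed.

Lemma is_derive_comp1 (f g : R -> R) (t df dg : R) : is_derive t 1 f df ->
  is_derive (f t) 1 g dg -> is_derive t 1 (g \o f) (dg * df).
Proof.
move=> hf hg.
have df1 : derivable f t 1 by case: hf.
have dg1 : derivable g (f t) 1 by case: hg.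
apply: DeriveDef.
  apply/derivable1_diffP; apply: differentiable_comp; exact/derivable1_diffP.
rewrite -derive1E derive1_comp // !derive1E.
by rewrite !derive_val.
Qed.

Lemma deriv_lim (f : R -> R) (L t0 : R) (fN : nat -> R -> R) (fN' : nat -> R)
  (e : nat -> R) :
  e @ \oo%classic --> (0:R) ->
  (forall N, is_derive t0 1 (fN N) (fN' N)) ->
  (forall N s, `|(f s - f t0 - (s - t0) * L) - (fN N s - fN N t0 - (s - t0) * fN' N)|
     <= e N * `|s - t0|) ->
  is_derive t0 1 f L.
Proof.
move=> e0 hd H.
suff q : (fun h : R => h^-1 *: ((f \o shift t0) (h *: 1) - f t0)) @ 0^' --> L.
  apply: DeriveDef; first by apply/cvg_ex; exists L.
  exact: cvg_lim q.
apply/cvgrPdist_le => eps eps0.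
have eps2 : 0 < eps / 2 by rewrite divr_gt0.
have [N _ hN] := (cvgrPdist_le _ _).1 e0 _ eps2.
have hNN := hN N (leqnn N).
have dN := hd N.
have cN : (fun h : R => h^-1 *: ((fN N \o shift t0) (h *: 1) - fN N t0)) @ 0^' --> fN' N.
  have : derivable (fN N) t0 1 by case: dN.
  rewrite /derivable => /cvg_ex [l hl].
  have : l = fN' N.
    rewrite -(@derive_val _ _ _ _ _ _ _ dN); rewrite /derive.
    by apply/esym/cvg_lim.
  by move=> <-.
have hq0 := (cvgrPdist_le _ _).1 cN _ eps2.
near=> h.
have h0 : h != 0 by near: h; exact: nbhs_dnbhs_neq.
have hq : `|fN' N - (fun h : R => h^-1 *: ((fN N \o shift t0) (h *: 1) - fN N t0)) h| <= eps / 2.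
  by near: h; exact: hq0.
rewrite /= in hq *.
have Hh := H N (h * 1 + t0).
rewrite addrK mulr1 in Hh.
rewrite /GRing.scale /= mulr1 in hq *.
rewrite sub0r normrN in hNN.
set A := fN N (h + t0) - fN N t0 in hq Hh.
set B := f (h + t0) - f t0 in Hh *.
have -> : L - h^-1 * B = (fN' N - h^-1 * A) + h^-1 * ((B - h * L) - (A - h * fN' N)) * (-1).
  by field.
apply: le_trans (ler_normD _ _) _.
rewrite (splitr eps); apply: lerD => //.
rewrite normrM normrN1 mulr1 normrM normfV.
rewrite ler_pdivrMl ?normr_gt0 //.
apply: le_trans Hh _; rewrite mulrC ler_wpM2l //.
apply: le_trans (ler_norm _) hNN.
Unshelve. all: by end_near. Qed.

End B0.

Local Open Scope classical_set_scope. Local Open Scope ring_scope.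
Section Box.
Variables (R : realType) (d : nat).
Implicit Types (F G : zpt d -> R).

Definition emb N N' (y : {ffun 'I_d -> 'I_(N.*2.+1)}) : {ffun 'I_d -> 'I_(N'.*2.+1)} :=
  [ffun i => inord (y i + (N' - N))].

Lemma emb_val N N' (y : {ffun 'I_d -> 'I_(N.*2.+1)}) i : (N <= N')%N -> (emb N' y i : nat) = (y i + (N' - N))%N.
Proof.
move=> NN'; rewrite ffunE inordK //.
have h := ltn_ord (y i); move: (nat_of_ord (y i)) h => a h.
rewrite -!muln2 in h *; lia.
Qed.

Lemma boxpt_emb N N' (y : {ffun 'I_d -> 'I_(N.*2.+1)}) : (N <= N')%N -> boxpt (emb N' y) = boxpt y.
Proof.
move=> NN'; apply: funext => i; rewrite /boxpt emb_val //.
lia.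
Qed.

Lemma emb_inj N N' : (N <= N')%N -> injective (@emb N N').
Proof.
move=> NN' y1 y2 E; apply/ffunP => i; apply/val_inj.
have := congr1 (fun y : {ffun 'I_d -> 'I_(N'.*2.+1)} => nat_of_ord (y i)) E.
rewrite /= !emb_val //; lia.
Qed.

Lemma box_split N N' F : (N <= N')%N ->
  boxsum N' F = boxsum N F +
    \sum_(y | y \notin (@emb N N') @: [set: {ffun 'I_d -> 'I_(N.*2.+1)}]) F (boxpt y).
Proof.
move=> NN'; rewrite /boxsum (bigID (mem ((@emb N N') @: [set: {ffun 'I_d -> 'I_(N.*2.+1)}]))) /=.
congr (_ + _).
rewrite big_imset /=; last by move=> x y _ _; exact: emb_inj.
by apply: eq_big => [y|y _]; [rewrite in_setT | rewrite (boxpt_emb _ NN')].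
Qed.

Lemma boxsumD N F G : boxsum N (fun x => F x + G x) = boxsum N F + boxsum N G.
Proof. exact: big_split. Qed.
Lemma boxsumZ N c F : boxsum N (fun x => c * F x) = c * boxsum N F.
Proof. by rewrite /boxsum mulr_sumr. Qed.
Lemma boxsumB N F G : boxsum N (fun x => F x - G x) = boxsum N F - boxsum N G.
Proof. by rewrite /boxsum -sumrB. Qed.

Lemma box_diff F G N N' : (N <= N')%N -> (forall x, `|F x| <= G x) ->
  `|boxsum N' F - boxsum N F| <= boxsum N' G - boxsum N G.
Proof.
move=> NN' FG; rewrite !(box_split _ NN') ![boxsum N _ + _]addrC !addrK.
apply: le_trans (ler_norm_sum _ _ _) _; exact: ler_sum.
Qed.

Lemma box_mono G N N' : (N <= N')%N -> (forall x, 0 <= G x) ->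
  boxsum N G <= boxsum N' G.
Proof.
move=> NN' G0; rewrite (box_split _ NN') lerDl; exact: sumr_ge0.
Qed.

Definition Summable G := exists B, forall N, boxsum N G <= B.

Lemma sum_cvg G : (forall x, 0 <= G x) -> Summable G -> cvgn (fun N => boxsum N G).
Proof.
move=> G0 [B hB]; apply: nondecreasing_is_cvgn.
  by move=> n m nm; exact: box_mono.
by exists B => _ [N _ <-].
Qed.

Lemma sum_le_lim G N : (forall x, 0 <= G x) -> Summable G ->
  boxsum N G <= limn (fun N => boxsum N G).
Proof.
move=> G0 SG; apply: nondecreasing_cvgn_le; last exact: sum_cvg.
by move=> n m nm; exact: box_mono.
Qed.

Lemma lim_le_B G B : (forall x, 0 <= G x) -> (forall N, boxsum N G <= B) ->
  limn (fun N => boxsum N G) <= B.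
Proof.
move=> G0 hB; apply: limr_le; first by apply: sum_cvg => //; exists B.
by apply: nearW.
Qed.

Lemma dom_cvg F G : (forall x, `|F x| <= G x) -> Summable G -> cvgn (fun N => boxsum N F).
Proof.
move=> FG [B hB].
have G0 : forall x, 0 <= G x by move=> x; exact: le_trans (FG x).
have -> : (fun N => boxsum N F) =
   (fun N => boxsum N (fun x => G x + F x)) - (fun N => boxsum N G).
  apply: funext => N; transitivity (boxsum N (fun x => G x + F x) - boxsum N G); last by [].
  by rewrite (boxsumD N G F) addrAC subrr add0r.
apply: is_cvgB; last by apply: sum_cvg => //; exists B.
apply: sum_cvg.
  by move=> x; have := FG x; rewrite ler_norml => /andP[h _]; lra.
exists (B + B) => N; rewrite (boxsumD N G F); apply: lerD => //.
rewrite /boxsum; apply: le_trans (ler_sum _ (fun y _ => le_trans (ler_norm _) (FG (boxpt y)))) _.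
exact: hB.
Qed.

Lemma dom_tail F G N : (forall x, `|F x| <= G x) -> Summable G ->
  `|limn (fun N => boxsum N F) - boxsum N F| <= limn (fun N => boxsum N G) - boxsum N G.
Proof.
move=> FG SG.
have G0 : forall x, 0 <= G x by move=> x; exact: le_trans (FG x).
have cF := dom_cvg FG SG.
set T := limn (fun N => boxsum N G) - boxsum N G.
have hT : forall N', (N <= N')%N -> `|boxsum N' F - boxsum N F| <= T.
  move=> N' NN'; apply: le_trans (box_diff NN' FG) _.
  by rewrite lerB // sum_le_lim.
have h1 : limn (fun N => boxsum N F) <= boxsum N F + T.
  apply: limr_le => //; exists N => // N' /= NN'.
  by have := hT N' NN'; rewrite ler_norml => /andP[_ h]; lra.
have h2 : boxsum N F - T <= limn (fun N => boxsum N F).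
  apply: limr_ge => //; exists N => // N' /= NN'.
  by have := hT N' NN'; rewrite ler_norml => /andP[h _]; lra.
rewrite ler_norml; apply/andP; split; lra.
Qed.

Lemma tail0 G : (forall x, 0 <= G x) -> Summable G ->
  (fun N => limn (fun N => boxsum N G) - boxsum N G) @ \oo --> (0:R).
Proof.
move=> G0 SG; have cG := sum_cvg G0 SG.
have h := cvgB (cvg_cst (limn (fun N => boxsum N G))) cG.
rewrite subrr in h; exact: h.
Qed.

End Box.

Local Open Scope classical_set_scope. Local Open Scope ring_scope.

Section Extra.
Variables (R : realType) (d : nat).
Implicit Types (F G : zpt d -> R).

Lemma dom_bound F G B : (forall x, `|F x| <= G x) -> (forall N, boxsum N G <= B) ->
  `|limn (fun N => boxsum N F)| <= B.
Proof.
move=> FG hB.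
have SG : Summable G by exists B.
have cF := dom_cvg FG SG.
have hN : forall N, `|boxsum N F| <= B.
  move=> N; apply: le_trans (hB N); rewrite /boxsum.
  apply: le_trans (ler_norm_sum _ _ _) _; apply: ler_sum => y _; exact: FG.
rewrite ler_norml; apply/andP; split.
  apply: limr_ge => //; apply: nearW => N; have := hN N; rewrite ler_norml => /andP[]//.
apply: limr_le => //; apply: nearW => N; have := hN N; rewrite ler_norml => /andP[]//.
Qed.

Lemma dom_tailZ F G c N : 0 <= c -> (forall x, `|F x| <= c * G x) -> Summable G ->
  (forall x, 0 <= G x) ->
  `|limn (fun N => boxsum N F) - boxsum N F| <= c * (limn (fun N => boxsum N G) - boxsum N G).
Proof.
move=> c0 FG [B hB] G0.
have SG' : Summable (fun x => c * G x).
  by exists (c * B) => N0; rewrite boxsumZ ler_wpM2l.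
have := dom_tail N FG SG'.
have cG := sum_cvg G0 (ex_intro _ B hB).
have -> : (fun N => boxsum N (fun x => c * G x)) = (fun N => c * boxsum N G).
  by apply: funext => N'; rewrite boxsumZ.
have -> : limn (fun N => c * boxsum N G) = c * limn (fun N => boxsum N G).
  by apply: cvg_lim => //; exact: cvgMl_tmp.
by rewrite boxsumZ mulrBr.
Qed.

Lemma sqr_le_sum (a : 'I_d -> R) i : a i ^+ 2 <= \sum_l a l ^+ 2.
Proof.
rewrite (bigD1 i) //= lerDl; apply: sumr_ge0 => l _; exact: sqr_ge0.
Qed.

Lemma coord_le_sqrt (a : 'I_d -> R) i : `|a i| <= Num.sqrt (\sum_l a l ^+ 2).
Proof.
rewrite -sqrtr_sqr ler_sqrt ?sqr_le_sum //.
apply: sumr_ge0 => l _; exact: sqr_ge0.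
Qed.

Lemma coord_le_rnorm (k : 'I_d -> R) i : `|k i| <= rnorm k.
Proof. exact: coord_le_sqrt. Qed.

Lemma coord_le_znorm (x : zpt d) i : `|(x i)%:~R| <= @znorm R d x.
Proof. exact: (coord_le_sqrt (fun l => (x l)%:~R)). Qed.

Lemma znorm_ge0 (x : zpt d) : 0 <= @znorm R d x.
Proof. exact: sqrtr_ge0. Qed.

Lemma rnorm_ge0 (k : 'I_d -> R) : 0 <= rnorm k.
Proof. exact: sqrtr_ge0. Qed.

Lemma znorm_ge1 (x : zpt d) i : x i != 0 -> 1 <= @znorm R d x.
Proof.
move=> xi0; rewrite /znorm -[X in X <= _]sqrtr1 ler_sqrt; last first.
  apply: sumr_ge0 => l _; exact: sqr_ge0.
apply: le_trans (sqr_le_sum (fun l : 'I_d => (x l)%:~R : R) i).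
have h : (1 <= x i * x i)%R by nia.
have h2 : ((1:int)%:~R <= (x i * x i)%:~R :> R) by rewrite ler_int.
by rewrite intrM -expr2 in h2.
Qed.

Lemma dotkx_le (k : 'I_d -> R) (x : zpt d) :
  `|dotkx k x| <= d%:R * (rnorm k * @znorm R d x).
Proof.
apply: le_trans (ler_norm_sum _ _ _) _.
apply: le_trans (_ : \sum_(i < d) (rnorm k * @znorm R d x) <= _).
  apply: ler_sum => i _; rewrite normrM; apply: ler_pM => //.
  - exact: coord_le_rnorm.
  - exact: coord_le_znorm.
by rewrite sumr_const card_ord mulr_natl.
Qed.

End Extra.

Local Open Scope classical_set_scope. Local Open Scope ring_scope.

Lemma is_derive_aff (R : realType) (t b c : R) :
  is_derive t 1 (fun s : R => s * b + c) b.
Proof.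
have H := is_deriveD (is_deriveM (@is_derive_id _ _ t 1) (is_derive_cst b t 1))
   (is_derive_cst c t 1).
have -> : (fun s : R => s * b + c) = (id * cst b + cst c) by apply: funext.
apply: is_derive_eq H _.
by rewrite /GRing.scale /= mulr0 mulr1 add0r addr0.
Qed.

Section Ser.
Variables (R : realType) (d : nat) (Pi : zpt d -> R) (k : 'I_d -> R) (j : 'I_d).

Definition xj (x : zpt d) : R := (x j)%:~R.
Definition term (n : nat) (t : R) (x : zpt d) : R :=
  Pi x * xj x ^+ n * cos (t * xj x + (dotkx k x + n%:R * (pi / 2))).
Definition Fs n t := limn (fun N => boxsum N (term n t)).
Definition Gm n (x : zpt d) : R := @znorm R d x ^+ n * `|Pi x|.

Lemma Gm_ge0 n x : 0 <= Gm n x.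
Proof. by rewrite mulr_ge0 // exprn_ge0 // znorm_ge0. Qed.

Lemma xj_le x : `|xj x| <= @znorm R d x.
Proof. exact: coord_le_znorm. Qed.

Lemma term_dom n t x : `|term n t x| <= Gm n x.
Proof.
rewrite /term /Gm !normrM [_ * `|Pi x|]mulrC -mulrA ler_wpM2l //.
rewrite -[X in _ <= X]mulr1; apply: ler_pM => //.
  by rewrite normrX; apply: lerXn2r; rewrite ?nnegrE ?znorm_ge0 // xj_le.
exact: cos_max.
Qed.

Lemma term_diff n s t x : `|term n s x - term n t x| <= `|s - t| * Gm n.+1 x.
Proof.
rewrite /term -mulrBr normrM /Gm exprS.
apply: le_trans (_ : `|Pi x * xj x ^+ n| * (`|s - t| * `|xj x|) <= _).
  apply: ler_wpM2l => //; apply: le_trans (cos_lip _ _) _.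
  by rewrite [X in `|X|](_ : _ = (s - t) * xj x) ?normrM //; ring.
rewrite normrM normrX.
have h1 : `|xj x| ^+ n <= @znorm R d x ^+ n.
  by apply: lerXn2r; rewrite ?nnegrE ?znorm_ge0 // xj_le.
have h2 := xj_le x.
have z0 := znorm_ge0 R x.
have p0 := normr_ge0 (Pi x).
have s0 := normr_ge0 (s - t).
have e0 : 0 <= `|xj x| ^+ n by apply: exprn_ge0.
rewrite [X in X <= _](_ : _ = `|s - t| * (`|xj x| * `|xj x| ^+ n * `|Pi x|)); last by ring.
apply: ler_wpM2l => //; apply: ler_wpM2r => //; exact: ler_pM.
Qed.

Lemma term_deriv (n : nat) (t : R) (x : zpt d) : is_derive t 1 (fun s => term n s x) (term n.+1 t x).
Proof.
set C := Pi x * xj x ^+ n; set c := dotkx k x + n%:R * (pi / 2).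
have hc := is_derive_comp1 (is_derive_aff t (xj x) c) (is_derive_cos _).
have H := is_deriveM (is_derive_cst C t 1) hc.
have -> : (fun s => term n s x) = (cst C * (cos \o (fun s => s * xj x + c))).
  by apply: funext => s.
apply: is_derive_eq H _.
rewrite /GRing.scale /= mulr0 addr0 /term exprS.
have -> : t * xj x + (dotkx k x + n.+1%:R * (pi / 2)) = (t * xj x + c) + pi / 2.
  by rewrite /c -natr1; ring.
by rewrite cosDpihalf /C; ring.
Qed.

Lemma boxsum_deriv (n N : nat) (t : R) :
  is_derive t 1 (fun s => boxsum N (term n s)) (boxsum N (term n.+1 t)).
Proof.
rewrite /boxsum.
have -> : (fun s => \sum_(y : {ffun 'I_d -> 'I_(N.*2.+1)}) term n s (boxpt y)) =
   \sum_(y : {ffun 'I_d -> 'I_(N.*2.+1)}) (fun s => term n s (boxpt y)).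
  by rewrite fct_sumE.
elim/big_ind2 : _ => // [|f1 df1 f2 df2 h1 h2|y _]; first exact: is_derive_cst.
  exact: is_deriveD.
exact: term_deriv.
Qed.

Variable M : nat.
Hypothesis hM : moment_finite M Pi.

Definition z0 : zpt d := fun _ => 0.

Lemma Gm_le n x : (n <= M)%N ->
  Gm n x <= Gm M x + (if [forall i, x i == 0] then `|Pi x| else 0).
Proof.
move=> nM; case: ifP => [/forallP h|/negbT].
  have xz : @znorm R d x = 0.
    rewrite /znorm big1 ?sqrtr0 // => i _; by rewrite (eqP (h i)) expr0n.
  rewrite /Gm xz expr0n; apply: le_trans (_ : `|Pi x| <= _).
    by case: (n == 0)%N; rewrite ?mul1r ?mul0r.
  by apply: ler_wpDl => //; rewrite mulr_ge0 // exprn_ge0.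
rewrite negb_forall => /existsP [i xi]; rewrite addr0.
rewrite /Gm ler_wpM2r //; apply: ler_weXn2l => //.
exact: (znorm_ge1 R xi).
Qed.

Lemma boxsum_Z N :
  boxsum N (fun x : zpt d => if [forall i, x i == 0] then `|Pi x| else 0) = `|Pi z0|.
Proof.
pose yc : {ffun 'I_d -> 'I_(N.*2.+1)} := [ffun => inord N].
have NN : (N < N.*2.+1)%N by rewrite ltnS -addnn leq_addr.
have vyc : forall i, (yc i : nat) = N by move=> i; rewrite ffunE inordK.
have bz : boxpt yc = z0.
  by apply: funext => i; rewrite /boxpt /z0 vyc subrr.
rewrite /boxsum -big_mkcond /= (big_pred1 yc) ?bz // => y /=.
apply/forallP/eqP => [h|->]; last by move=> i; rewrite bz.
apply/ffunP => i; apply/val_inj; rewrite /= vyc.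
have := h i; rewrite /boxpt => /eqP; lia.
Qed.

Lemma Gm_bound n : (n <= M)%N -> exists B, forall N, boxsum N (Gm n) <= B /\ 0 <= B.
Proof.
move=> nM; case: hM => B hB; exists (B + `|Pi z0|) => N.
have B0 : 0 <= B.
  apply: le_trans (hB 0%N); apply: sumr_ge0 => y _; apply: mulr_ge0 => //.
  by rewrite exprn_ge0 // znorm_ge0.
split; last by rewrite addr_ge0.
apply: le_trans (_ : boxsum N (fun x => Gm M x + (if [forall i, x i == 0] then `|Pi x| else 0)) <= _).
  by apply: ler_sum => y _; exact: Gm_le.
by rewrite boxsumD boxsum_Z lerD2r; exact: hB.
Qed.

Lemma Gm_summable n : (n <= M)%N -> Summable (Gm n).
Proof. by move=> /Gm_bound [B hB]; exists B => N; case: (hB N). Qed.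

Lemma Fs_cvg n t : (n <= M)%N -> cvgn (fun N => boxsum N (term n t)).
Proof. move=> nM; apply: dom_cvg (Gm_summable nM); exact: term_dom. Qed.

Lemma Fs_deriv (n : nat) (t : R) : (n < M)%N -> is_derive t 1 (Fs n) (Fs n.+1 t).
Proof.
move=> nM; have nM' := ltnW nM.
pose T N := limn (fun N => boxsum N (Gm n.+1)) - boxsum N (Gm n.+1).
apply: (@deriv_lim _ _ _ _ (fun N s => boxsum N (term n s))
  (fun N => boxsum N (term n.+1 t)) (fun N => T N + T N)).
- have := cvgD (tail0 (Gm_ge0 n.+1) (Gm_summable nM)) (tail0 (Gm_ge0 n.+1) (Gm_summable nM)).
  by move=> h; rewrite addr0 in h; exact: h.
- by move=> N; exact: boxsum_deriv.
move=> N s.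
have eq1 : Fs n s - Fs n t = limn (fun N => boxsum N (fun x => term n s x - term n t x)).
  apply/esym/cvg_lim => //.
  have -> : (fun N => boxsum N (fun x => term n s x - term n t x)) =
      (fun N => boxsum N (term n s) - boxsum N (term n t)).
    by apply: funext => N'; rewrite boxsumB.
  exact: (cvgB (Fs_cvg (t:=s) nM') (Fs_cvg (t:=t) nM')).
have H1 := dom_tailZ N (normr_ge0 (s - t)) (term_diff n s t) (Gm_summable nM) (Gm_ge0 _).
have H2 := dom_tail N (term_dom n.+1 t) (Gm_summable nM).
rewrite -eq1 boxsumB in H1.
rewrite -/(Fs n.+1 t) in H2.
rewrite -/(T N) in H1 H2.
set a := Fs n s - Fs n t - _ in H1.
have -> : Fs n s - Fs n t - (s - t) * Fs n.+1 t -
    (boxsum N (term n s) - boxsum N (term n t) - (s - t) * boxsum N (term n.+1 t))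
    = a - (s - t) * (Fs n.+1 t - boxsum N (term n.+1 t)).
  by rewrite /a; ring.
apply: le_trans (ler_normB _ _) _.
rewrite [X in _ <= X]mulrDl; apply: lerD; first by rewrite mulrC.
by rewrite normrM mulrC ler_wpM2r.
Qed.

Lemma Fs_bound n t : (n <= M)%N -> exists B, `|Fs n t| <= B /\ 0 <= B.
Abort.

End Ser.

Local Open Scope classical_set_scope. Local Open Scope ring_scope.

Section Ser2.
Variables (R : realType) (d : nat) (Pi : zpt d -> R) (k : 'I_d -> R) (j : 'I_d).

Lemma dotk_shift t (x : zpt d) :
  dotkx (fun i => k i + (if i == j then t else 0)) x = t * xj R j x + dotkx k x.
Proof.
rewrite /dotkx; under eq_bigr do rewrite mulrDl.
rewrite big_split /= addrC; congr (_ + _).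
rewrite (bigD1 j) //= eqxx big1 ?addr0 // => i /negbTE ->; by rewrite mul0r.
Qed.

Lemma along_hatPi : along (hatPi Pi) k j = Fs Pi k j 0.
Proof.
apply: funext => t; rewrite /along /hatPi /Fs.
suff -> : (fun x : zpt d => Pi x * cos (dotkx (fun i => k i + (if i == j then t else 0)) x))
   = term Pi k j 0 t by [].
by apply: funext => x; rewrite /term dotk_shift expr0 mulr1 mul0r addr0.
Qed.

Definition Cj := \sum_(i | i != j) cos (k i).
Definition Dt (n : nat) (t : R) : R :=
  (d%:R)^-1 * ((if n == 0%N then Cj else 0) + cos (t * 1 + (k j + n%:R * (pi / 2)))).

Lemma along_hatD : along (@hatD R d) k j = Dt 0.
Proof.
apply: funext => t; rewrite /along /hatD /Dt /=; congr (_ * _).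
rewrite (bigD1 j) //= eqxx addrC mulr1 mul0r addr0 [k j + t]addrC; congr (_ + _).
by apply: eq_bigr => i /negbTE ->; rewrite addr0.
Qed.

Lemma Dt_deriv n (t : R) : is_derive t 1 (Dt n) (Dt n.+1 t).
Proof.
set c := k j + n%:R * (pi / 2).
have hc := is_derive_comp1 (is_derive_aff t 1 c) (is_derive_cos _).
have H := is_deriveM (is_derive_cst ((d%:R)^-1 : R) t 1)
  (is_deriveD (is_derive_cst ((if n == 0%N then Cj else 0) : R) t 1) hc).
have -> : Dt n = cst ((d%:R)^-1 : R) * (cst ((if n == 0%N then Cj else 0) : R) + cos \o (fun s => s * 1 + c)).
  by apply: funext => s.
apply: is_derive_eq H _.
rewrite /GRing.scale /= mulr0 addr0 add0r /Dt /=.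
have -> : t * 1 + (k j + n.+1%:R * (pi / 2)) = (t * 1 + c) + pi / 2.
  by rewrite /c -natr1; ring.
by rewrite cosDpihalf; ring.
Qed.

Hypothesis d1 : (1 <= d)%N.

Lemma dinv_le1 : 0 <= (d%:R : R)^-1 <= 1.
Proof.
have d0 : (0 < d%:R :> R) by rewrite ltr0n.
apply/andP; split; first by rewrite invr_ge0 ltW.
by rewrite invf_le1 // ler1n.
Qed.

Lemma Cj_le : `|Cj| <= d%:R.
Proof.
apply: le_trans (ler_norm_sum _ _ _) _.
apply: le_trans (_ : \sum_(i | i != j) (1 : R) <= _).
  by apply: ler_sum => i _; exact: cos_max.
rewrite sumr_const ler_nat; apply: leq_trans (max_card _) _; by rewrite card_ord.
Qed.

Lemma Dt_bound n : `|Dt n 0| <= 2.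
Proof.
have /andP[h0 h1] := dinv_le1.
rewrite /Dt normrM (ger0_norm h0).
have hc : `|(if n == 0%N then Cj else 0) + cos (0 * 1 + (k j + n%:R * (pi / 2)))| <= d%:R + 1.
  apply: le_trans (ler_normD _ _) _; apply: lerD; last exact: cos_max.
  by case: (n == 0%N); rewrite ?normr0 ?ler0n ?Cj_le.
apply: le_trans (ler_wpM2l h0 hc) _.
rewrite mulrDr mulVf ?pnatr_eq0 -?lt0n // (_ : 2 = 1 + 1) //; apply: lerD => //.
by rewrite mulr1.
Qed.

Lemma Dt1_bound : `|Dt 1 0| <= rnorm k.
Proof.
have /andP[h0 h1] := dinv_le1.
rewrite /Dt /= add0r mul0r add0r mul1r cosDpihalf normrM normrN (ger0_norm h0).
apply: le_trans (_ : 1 * `|sin (k j)| <= _).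
  by apply: ler_wpM2r.
by rewrite mul1r; apply: le_trans (sin_le _) (coord_le_rnorm _ _).
Qed.

Variable M : nat.
Hypothesis hM : moment_finite M Pi.

Lemma Gm_boundB B : (forall N, boxsum N (fun x => @znorm R d x ^+ M * `|Pi x|) <= B) ->
  forall n, (n <= M)%N -> forall N, boxsum N (Gm Pi n) <= B + `|Pi (@z0 d)|.
Proof.
move=> hB n nM N.
apply: le_trans (_ : boxsum N (fun x => Gm Pi M x + (if [forall i, x i == 0] then `|Pi x| else 0)) <= _).
  by apply: ler_sum => y _; exact: Gm_le.
by rewrite boxsumD boxsum_Z lerD2r; exact: hB.
Qed.

Lemma Fs_boundB B : (forall N, boxsum N (fun x => @znorm R d x ^+ M * `|Pi x|) <= B) ->
  forall n t, (n <= M)%N -> `|Fs Pi k j n t| <= B + `|Pi (@z0 d)|.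
Proof.
move=> hB n t nM; apply: (dom_bound (G := Gm Pi n)); first exact: term_dom.
exact: Gm_boundB.
Qed.

Lemma Fs1_bound B2 : (forall N, boxsum N (fun x => @znorm R d x ^+ 2 * `|Pi x|) <= B2) ->
  `|Fs Pi k j 1 0| <= d%:R * rnorm k * B2.
Proof.
move=> hB.
apply: (dom_bound (G := fun x => d%:R * rnorm k * (@znorm R d x ^+ 2 * `|Pi x|))).
  move=> x; rewrite /term expr1 mul0r add0r mul1r cosDpihalf.
  rewrite !normrM normrN.
  have h1 := sin_le (dotkx k x); have h2 := dotkx_le k x; have h3 := xj_le R j x.
  have zz := znorm_ge0 R x; have p0 := normr_ge0 (Pi x).
  have r0 := rnorm_ge0 k.
  rewrite [X in _ <= X](_ : _ = `|Pi x| * (@znorm R d x * (d%:R * (rnorm k * @znorm R d x)))); last by ring.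
  rewrite -mulrA; apply: ler_wpM2l => //; apply: ler_pM => //.
  exact: le_trans h1 h2.
move=> N; rewrite boxsumZ; apply: ler_wpM2l => //.
by rewrite mulr_ge0 // rnorm_ge0.
Qed.

End Ser2.

Local Close Scope classical_set_scope.
Unset Implicit Arguments. Set Strict Implicit.
Local Open Scope ring_scope.

Theorem lemma4p1 (R : realType) (d : nat) (Pi : zpt d -> R) (p : R)
  (J g : ('I_d -> R) -> R) (M : nat) :
  (3 <= d)%N ->
  Zd_symmetric Pi ->
  moment_finite 2 Pi ->
  0 < p ->
  ((forall k, J k = 2 * d%:R * p * hatD k + hatPi Pi k /\ g k = 1)
   \/ (forall k, J k = 2 * d%:R * p * hatD k * (1 + hatPi Pi k) /\ g k = 1 + hatPi Pi k)
   \/ (exists G0 : R, 0 < G0 /\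
         forall k, J k = 2 * d%:R * p * hatD k * (G0 + hatPi Pi k) /\ g k = G0 + hatPi Pi k)) ->
  J (@zerok R d) = 1 ->
  (exists c1 : R, 0 < c1 /\
     forall k, in_torus k -> J (@zerok R d) - J k >= c1 * rnorm k ^+ 2) ->
  (0 < M)%N ->
  moment_finite M Pi ->
  let hatG := fun k => g k / (1 - J k) in
  forall m : nat, (1 <= m <= M)%N -> forall j : 'I_d,
    exists c : R, forall k : 'I_d -> R, in_torus k -> k <> @zerok R d ->
      @partialn_exists R d m hatG k j /\
      `| @partialn R d m hatG k j | <= c / rnorm k ^+ (2 + m).
Proof.
move=> d3 _ h2 _ hcases hJ0 [c1 [c10 hc1]] _ hM hatG m /andP[m1 mM] j.
have d1 : (1 <= d)%N by apply: leq_trans d3.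
have [a [b [l [u hJg]]]] : exists a b l u : R, forall k,
    J k = a * hatD k * (b + l * hatPi Pi k) + u * hatPi Pi k /\ g k = b + l * hatPi Pi k.
  case: hcases => [h|[h|[G0 [_ h]]]].
  - by exists (2 * d%:R * p), 1, 0, 1 => k; case: (h k) => -> ->; split; ring.
  - by exists (2 * d%:R * p), 1, 1, 0 => k; case: (h k) => -> ->; split; ring.
  - by exists (2 * d%:R * p), G0, 1, 0 => k; case: (h k) => -> ->; split; ring.
have [B2 hB2] := h2.
have [BM hBM] := hM.
have B20 : 0 <= B2.
  apply: le_trans (hB2 0%N); apply: sumr_ge0 => y _; apply: mulr_ge0 => //.
  by rewrite exprn_ge0 // znorm_ge0.
have pi0 : 0 < pi :> R := @pi_gt0 R.
pose D0 : R := 1 + d%:R * pi ^+ 2.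
have D01 : 1 <= D0 by rewrite /D0 lerDl mulr_ge0 // exprn_ge0 // ltW.
pose SP := BM + `|Pi (@z0 d)| + d%:R * B2.
pose QD : R := 2 * D0 ^+ m.
pose QP := SP * D0 ^+ m.
pose Kv' := 1 + KJ D0 m QD QP a b l u.
pose Ku := Kg QP b l.
exists (2 ^+ m * (Ku * (D0 * D0) * Kv c1 Kv' m)) => k hk kn0.
set dl := rnorm k.
have dl0 : 0 < dl.
  rewrite /dl /rnorm sqrtr_gt0 lt_neqAle eq_sym sumr_ge0 ?andbT; last first.
    by move=> i _; exact: sqr_ge0.
  apply/negP => /eqP /psumr_eq0P h; apply: kn0; apply: funext => i.
  have := h (fun i _ => sqr_ge0 _) i isT; rewrite /zerok => /eqP; rewrite sqrf_eq0 => /eqP; by [].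
have dlD : dl <= D0.
  have hs : dl ^+ 2 = \sum_(i < d) k i ^+ 2.
    by rewrite /dl /rnorm sqr_sqrtr // sumr_ge0 // => i _; exact: sqr_ge0.
  have hs2 : \sum_(i < d) k i ^+ 2 <= d%:R * pi ^+ 2.
    apply: le_trans (_ : \sum_(i < d) pi ^+ 2 <= _).
      apply: ler_sum => i _; have /andP[h1 h3] := hk i; nra.
    by rewrite sumr_const card_ord mulr_natl.
  rewrite /D0; nra.
have hD : Q dl QD m (along (@hatD R d) k j).
  rewrite along_hatD.
  apply: (tower_Q dl0 dlD D01) => //.
  - by move=> n _ t; exact: Dt_deriv.
  - exact: Dt_bound.
  - apply: le_trans (Dt1_bound k j d1) _; rewrite ler_peMl ?ltW //; lra.
  - by move=> n _; exact: Dt_bound.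
have hP : Q dl QP m (along (hatPi Pi) k j).
  have hF : forall n t, (n <= M)%N -> `|Fs Pi k j n t| <= BM + `|Pi (@z0 d)|.
    by move=> n t nM; exact: (Fs_boundB k j hBM).
  have dB : 0 <= d%:R * B2 by rewrite mulr_ge0.
  rewrite along_hatPi.
  apply: (tower_Q dl0 dlD D01) => //.
  - move=> n nm t; exact: (Fs_deriv k j hM t (leq_trans nm mM)).
  - by apply: le_trans (hF 0%N 0 (leq0n _)) _; rewrite /SP lerDl.
  - apply: le_trans (Fs1_bound k j hB2) _.
    rewrite /SP [_ * dl * _]mulrAC (ler_pM2r dl0) lerDr.
    by apply: le_trans (normr_ge0 _) (hF 0%N 0 (leq0n _)).
  - move=> n /andP[_ nm]; apply: le_trans (hF n 0 (leq_trans nm mM)) _.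
    by rewrite /SP lerDl.
have [hg hv] := build dl0 dlD D01 a b l u hD hP.
have hu : Q dl Ku m (along g k j).
  apply: Q_ext hg => t; rewrite /along; by case: (hJg (fun i => k i + (if i == j then t else 0))) => _ ->.
have hv' : Q dl Kv' m (fun t => 1 - along J k j t).
  apply: Q_ext hv => t; rewrite /along; by case: (hJg (fun i => k i + (if i == j then t else 0))) => -> _.
have hlow : c1 * dl ^+ 2 <= `|1 - along J k j 0|.
  rewrite /along.
  have -> : (fun i => k i + (if i == j then 0 else 0)) = k.
    by apply: funext => i; case: ifP; rewrite addr0.
  apply: le_trans (ler_norm _); rewrite -hJ0; exact: hc1.
have H := assemble dl0 dlD D01 c10 hu hv' hlow.
split.
  by move=> i im; exact: (Pr_exists H im).
have := Pr_nth (leqnn m) H.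
rewrite /pw (_ : -2 - m%:Z = - (2 + m)%N%:Z); last by lia.
by rewrite -exprnN.
Qed.
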